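(* Let $h:Q\to P$ be an $\iota$-map of positive opetopes, $k\ge0$, $q\in Q_{k+2}$ and $q'\in\delta(q)$ such that $h(q),h(q')\in P_k$. Then $h(q')=h(\gamma(q))$.
   Context: A positive hypergraph $S$ consists of finite sets $S_k$ ($k\in\mathbb{N}$), only finitely many nonempty, functions $\gamma:S_{k+1}\to S_k$, and for each $k$ an assignment $\delta$ sending each $a\in S_{k+1}$ to a nonempty subset $\delta(a)\subseteq S_k$, with $\delta(a)$ a singleton for $a\in S_1$. A face is identified with its singleton; $\gamma(X)=\{\gamma(a):a\in X\}$, $\delta(X)=\bigcup_{a\in X}\delta(a)$. For $k>0$ the lower order $<^-$ on $S_k$ is the transitive closure of: $a\lhd b$ iff $\gamma(a)\in\delta(b)$. The upper order $<^+$ on $S_k$ is the transitive closure of: $a\lhd b$ iff there is $\alpha\in S_{k+1}$ with $a\in\delta(\alpha)$, $\gamma(\alpha)=b$; $a\perp^{\pm}b$ iff $a<^{\pm}b$ or $b<^{\pm}a$. A positive opetopic cardinal: $S_0\ne\emptyset$; globularity ($\gamma\gamma(a)=\gamma\delta(a)-\delta\delta(a)$, $\delta\gamma(a)=\delta\delta(a)-\gamma\delta(a)$ for $\dim a\ge2$); each $<^+$ a strict order, linear on $S_0$; for $k>0$, $\perp^-\cap\perp^+=\emptyset$ on $S_k$; for $x\in S_{k-1}$, $\{a:\gamma(a)=x\}$ and $\{a:x\in\delta(a)\}$ linearly ordered by $<^+$. A positive opetope: additionally $|P_m-\delta(P_{m+1})|\le1$ for all $m$. $\gamma^{(k)}(p)=p$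 if $\dim p\le k$, else $\gamma^{(k)}(p)=\gamma(\gamma^{(k+1)}(p))$. An $\iota$-map $h:Q\to P$ of positive opetopes is a function on faces with: $\dim h(q)\le\dim q$; $h(\gamma^{(k)}(q))=\gamma^{(k)}(h(q))$ for $k\ge0$, $q\in Q_{k+1}$; and, with $\ker(h)=\{q:\dim q>\dim h(q)\}$, for $q\in Q_{k+1}$: if $\dim h(q)=k+1$, $h$ restricts to a bijection $\delta(q)-\ker(h)\to\delta(h(q))$; if $\dim h(q)=k$, to a bijection $\delta(q)-\ker(h)\to\{h(q)\}$; if $\dim h(q)<k$, $\delta(q)\subseteq\ker(h)$. *)

(* Defs.v *)
From mathcomp Require Import all_boot.
#[local] Set Warnings "-notation-overridden".
Set Implicit Arguments. Unset Strict Implicit. Unset Printing Implicit Defensive.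

(* A (candidate) positive hypergraph: all faces of all dimensions are collected
   in one finite type [face]; [dim a = k] means a ∈ S_k.  [gam] and [del] are
   only meaningful on faces of positive dimension (their values on 0-faces are
   irrelevant junk and are never used). *)
Record hgraph := HGraph {
  face : finType;
  dim : face -> nat;
  gam : face -> face;
  del : face -> {set face}
}.

Section Defs.
Variable S : hgraph.
Local Notation F := (face S).
Local Notation dim := (@dim S).
Local Notation gam := (@gam S).
Local Notation del := (@del S).

Definition is_pos_hypergraph : Prop :=
  forall a : F, 0 < dim a ->
    [/\ dim (gam a) = (dim a).-1,
        del a != set0,
        (forall b, b \in del a -> dim b = (dim a).-1) &
        (dim a = 1 -> #|del a| = 1)].

Definition gamS (X : {set F}) : {set F} := gam @: X.
Definition delS (X : {set F}) : {set F} := \bigcup_(a in X) del a.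

Definition tclos (r : rel F) : rel F :=
  fun a b => [exists c, r a c && connect r c b].

Definition lower_step (a b : F) : bool :=
  [&& 0 < dim a, dim a == dim b & gam a \in del b].
Definition lt_minus : rel F := tclos lower_step.

Definition upper_step (a b : F) : bool :=
  (dim a == dim b) &&
  [exists al : F, [&& dim al == (dim b).+1, a \in del al & gam al == b]].
Definition lt_plus : rel F := tclos upper_step.

Definition perp_minus (a b : F) : bool := lt_minus a b || lt_minus b a.
Definition perp_plus (a b : F) : bool := lt_plus a b || lt_plus b a.

(* A set is linearly ordered by <+ (which is already a strict order) *)
Definition plus_linear (X : {set F}) : Prop :=
  forall a b, a \in X -> b \in X -> a != b -> perp_plus a b.

Definition is_pos_opetopic_cardinal : Prop :=
  is_pos_hypergraph /\
  (exists a : F, dim a = 0) /\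
      (forall a : F, 2 <= dim a ->
         [set gam (gam a)] = gamS (del a) :\: delS (del a) /\
         del (gam a) = delS (del a) :\: gamS (del a)) /\
      (* each <+ is a strict order (transitive by construction) *)
      (forall a : F, ~~ lt_plus a a) /\
      plus_linear [set a | dim a == 0] /\
      (forall a b : F, 0 < dim a -> dim a = dim b ->
         ~~ (perp_minus a b && perp_plus a b)) /\
      (forall x : F,
         plus_linear [set a | (dim a == (dim x).+1) && (gam a == x)] /\
         plus_linear [set a | (dim a == (dim x).+1) && (x \in del a)]).

Definition is_pos_opetope : Prop :=
  is_pos_opetopic_cardinal /\
  forall m : nat,
    #|[set a : F | dim a == m] :\: delS [set a : F | dim a == m.+1]| <= 1.

(* γ^(k)(p): p if dim p <= k, else γ(γ^(k+1)(p)); i.e. γ iterated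
   (dim p - k) times. *)
Definition gamk (k : nat) (p : F) : F := iter (dim p - k) gam p.

End Defs.

Section IotaMap.
Variables Q P : hgraph.

Definition ker (h : face Q -> face P) : {set face Q} :=
  [set q | dim (h q) < dim q].

Definition is_iota_map (h : face Q -> face P) : Prop :=
  [/\ (forall q, dim (h q) <= dim q),
      (forall k q, dim q = k.+1 -> h (gamk k q) = gamk k (h q)) &
      (forall k q, dim q = k.+1 ->
         let A := del q :\: ker h in
         [/\ dim (h q) = k.+1 -> {in A &, injective h} /\ h @: A = del (h q),
             dim (h q) = k -> {in A &, injective h} /\ h @: A = [set h q] &
             dim (h q) < k -> del q \subset ker h])].
End IotaMap.

(* Main.v *)
Require Import Defs.
From mathcomp Require Import all_boot.
From mathcomp Require Import zify.

Lemma ltp_trans (S : hgraph) (a b c : face S) :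
  upper_step a b -> lt_plus b c -> lt_plus a c.
Proof.
move=> ab /existsP[d /andP[bd dc]]; apply/existsP; exists b; rewrite ab /=.
exact: connect_trans (connect1 bd) dc.
Qed.

Lemma ltp_step (S : hgraph) (a b : face S) : upper_step a b -> lt_plus a b.
Proof. by move=> ab; apply/existsP; exists b; rewrite ab connect0. Qed.

Theorem mainTheorem8 (Q P : hgraph) (h : face Q -> face P) (k : nat)
    (q q' : face Q) :
  is_pos_opetope Q -> is_pos_opetope P -> is_iota_map h ->
  dim q = k.+2 -> q' \in del q ->
  dim (h q) = k -> dim (h q') = k ->
  h q' = h (gam q).
Proof.
move=> [[HQ [_ [Hglob [Hirr _]]]] _] _ [Hdim Hgam Hdel] dq q'q dhq dhq'.
case: (HQ q); first by rewrite dq.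
rewrite dq /= => dgq _ ddq _.
have F1 : h (gam q) = h q.
  have := Hgam k.+1 q dq; rewrite /gamk dq dhq.
  have -> : k.+2 - k.+1 = 1 by lia.
  by have -> : k - k.+1 = 0 by lia.
have F2 : h (gam (gam q)) = h q.
  have := Hgam k (gam q) dgq; rewrite /gamk dgq F1 dhq.
  have -> : k.+1 - k = 1 by lia.
  by rewrite subnn.
have Hker : del q \subset ker h.
  by case: (Hdel k.+1 q dq) => _ _ /(_ _); apply; rewrite dhq.
have Fb : forall b, b \in del q ->
    [/\ dim b = k.+1, dim (gam b) = k, dim (h b) <= k & h (gam b) = h b].
  move=> b bq.
  have db := ddq b bq.
  have dhb : dim (h b) <= k.
    by move/subsetP: Hker => /(_ b bq); rewrite inE db.
  case: (HQ b); first by rewrite db.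
  rewrite db /= => dgb _ _ _.
  split => //.
  have := Hgam k b db; rewrite /gamk db.
  have -> : k.+1 - k = 1 by lia.
  by have -> : dim (h b) - k = 0 by lia.
suff main : forall n b, #|[set c | lt_plus (gam b) c]| < n ->
    b \in del q -> dim (h b) = k -> h b = h q.
  by rewrite F1; apply: (main _ q' (ltnSn _)).
elim=> [//|n IH] b Hn bq dhb.
case: (Fb b bq) => db dgb _ hgb.
case: (boolP (gam b \in \bigcup_(a in del q) del a)).
  move=> /bigcupP[b' b'q gbb'].
  case: (Fb b' b'q) => db' dgb' dhb' hgb'.
  have up : upper_step (gam b) (gam b').
    rewrite /upper_step dgb dgb' eqxx /=.
    apply/existsP; exists b'. by rewrite db' gbb' !eqxx.
  have gbnk : gam b \notin ker h by rewrite inE hgb dhb dgb ltnn.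
  have dhb'k : dim (h b') = k.
    apply/eqP; rewrite eqn_leq dhb' leqNgt; apply/negP => lt.
    case: (Hdel k b' db') => _ _ /(_ lt) /subsetP /(_ _ gbb').
    by move: gbnk => /negP.
  case: (Hdel k b' db') => _ /(_ dhb'k) [_ Himg] _.
  have : h (gam b) \in [set h b'].
    by rewrite -Himg; apply: imset_f; rewrite inE gbnk gbb'.
  rewrite inE => /eqP; rewrite hgb => ->.
  apply: IH b'q dhb'k.
  apply: leq_trans _ (_ : #|[set c | lt_plus (gam b) c]| <= n); last by [].
  apply: proper_card; apply/properP; split.
    by apply/subsetP => c; rewrite !inE; exact: ltp_trans up.
  exists (gam b'); rewrite inE; [exact: ltp_step up | exact: Hirr].
move=> ngb.
have : gam b \in gamS (del q) :\: delS (del q).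
  by rewrite inE ngb /gamS; apply: imset_f.
have G2 : 2 <= dim q by rewrite dq.
rewrite -(Hglob q G2).1 inE => /eqP ggb.
by rewrite -hgb ggb F2.
Qed.
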